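(* Let $A$ be a finite alphabet and $P\in I(A^* )$ defined by $P(u,v)=\binom{v}{u}$. For all $u,v\in A^*$ and every integer $d$ (for $d<0$, $P^d$ means $(P^{-1})^{-d}$, and $P^0=\delta$), $$P^d(u,v)=d^{|v|-|u|}P(u,v),$$ with the convention $0^0=1$. Equivalently, for $d\ne0$, letting $D_d\in I(A^* )$ be $D_d(u,v)=d^{|u|}\delta(u,v)$, one has $P^d=D_d^{-1}PD_d=D_{1/d}PD_d$; in particular $P^{-1}=D_{-1}PD_{-1}$.
   Context: $A^*$ is the set of finite words over $A$; $|w|$ is the length. For words $u=a_1\cdots a_k$, $v=b_1\cdots b_n$, $\binom{v}{u}$ is the number of order-preserving injections $\varphi:[k]\to[n]$ with $a_i=b_{\varphi(i)}$ for all $i$. $A^*$ is ordered by $u\le v$ iff $\binom{v}{u}>0$. $I(A^* )$ is the incidence algebra over $\mathbb{Q}$: functions on pairs $(u,v)$ with $u\le v$, convolution $(FG)(u,v)=\sum_{u\le w\le v}F(u,w)G(w,v)$, identity $\delta(u,v)=[u=v]$ (Iverson bracket). $P$ is invertible since $P(u,u)=1$. *)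

(* Defs.v *)
From HB Require Import structures.
From mathcomp Require Import all_boot all_order all_algebra.
Set Implicit Arguments. Unset Strict Implicit. Unset Printing Implicit Defensive.
Import Order.TTheory GRing.Theory Num.Theory.
Local Open Scope ring_scope.

Section Incidence.
Variable A : finType.

(* Elements of the incidence algebra I(A^* ) over Q, represented as functions
   on all pairs; only the values on pairs u <= v (subword order) matter, and all
   operations below produce 0 on incomparable pairs. *)
Definition incf := seq A -> seq A -> rat.

Definition binomw (v u : seq A) : nat :=
  (\sum_(m : (size v).-tuple bool) (mask m v == u))%N.

Definition subw (u v : seq A) : bool := (0 < binomw v u)%N.

Fixpoint subwords_rep (v : seq A) : seq (seq A) :=
  match v with
  | [::] => [:: [::]]
  | a :: v' => [seq a :: w | w <- subwords_rep v'] ++ subwords_rep v'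
  end.

Definition subwords (v : seq A) : seq (seq A) := undup (subwords_rep v).

Definition conv (F G : incf) : incf := fun u v =>
  \sum_(w <- subwords v | subw u w && subw w v) F u w * G w v.

Definition delta : incf := fun u v => (u == v)%:R.

Definition Pm : incf := fun u v => (binomw v u)%:R.

(* inverse of F (with F(u,u) <> 0), by the standard recursion
   G(u,u) = F(u,u)^-1,  G(u,v) = - F(v,v)^-1 * sum_{u <= w < v} G(u,w) F(w,v);
   n is fuel (size v suffices). *)
Fixpoint inv_aux (n : nat) (F : incf) (u v : seq A) : rat :=
  if u == v then (F v v)^-1 else
  match n with
  | 0 => 0
  | n'.+1 => - (F v v)^-1 *
      \sum_(w <- subwords v | subw u w && subw w v && (w != v))
         inv_aux n' F u w * F w v
  end.

Definition incinv (F : incf) : incf := fun u v =>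
  if subw u v then inv_aux (size v) F u v else 0.

Fixpoint incpow (F : incf) (n : nat) : incf :=
  match n with
  | 0 => delta
  | n'.+1 => conv (incpow F n') F
  end.

Definition incpowz (F : incf) (d : int) : incf :=
  match d with
  | Posz n => incpow F n
  | Negz n => incpow (incinv F) n.+1
  end.

Definition Dm (c : rat) : incf := fun u v => c ^+ size u * delta u v.

End Incidence.

(* Main.v *)
Require Import Defs.
From HB Require Import structures.
From mathcomp Require Import all_boot all_order all_algebra.
From mathcomp Require Import ring.
From Stdlib Require Import FunctionalExtensionality.
Import Order.TTheory GRing.Theory Num.Theory.
Local Open Scope ring_scope.
Set Implicit Arguments. Unset Strict Implicit.

Section S.
Variable A : finType.
Implicit Types u v w : seq A.

Lemma sum_tuple_cons n (F : n.+1.-tuple bool -> nat) :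
  (\sum_(m : n.+1.-tuple bool) F m =
   \sum_(b : bool) \sum_(t : n.-tuple bool) F [tuple of b :: t])%N.
Proof.
rewrite pair_big /=.
rewrite (reindex (fun p : bool * n.-tuple bool => [tuple of p.1 :: p.2])) //=.
exists (fun m : n.+1.-tuple bool => (thead m, [tuple of behead m])) => [[b t] _|m _] /=.
  by congr (_, _); apply: val_inj.
by rewrite [RHS]tuple_eta.
Qed.

Lemma binomw_nil w : binomw [::] w = (w == [::]).
Proof.
rewrite /binomw (big_pred1 [tuple]) /=.
  by rewrite eq_sym.
move=> t; apply/esym/eqP/val_inj; by case: t => [[]].
Qed.

Lemma binomw_cons x v w : binomw (x :: v) w =
  (binomw v w + if w is y :: w' then (x == y) * binomw v w' else 0)%N.
Proof.
rewrite /binomw sum_tuple_cons big_bool /= addnC; congr (_ + _)%N.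
case: w => [|y w]; first by apply: big1.
case: (x =P y) => [<-|nxy] /=.
  by rewrite mul1n; apply: eq_bigr => t _; rewrite eqseq_cons eqxx.
by rewrite mul0n big1 // => t _; rewrite eqseq_cons; case: eqP.
Qed.

Lemma count_map_cons x s w :
  count_mem w (map (cons x) s) =
  (if w is y :: w' then (x == y) * count_mem w' s else 0)%N.
Proof.
rewrite count_map; case: w => [|y w].
  by rewrite (eq_count (a2 := pred0)) ?count_pred0.
case: (x =P y) => [<-|nxy].
  by rewrite mul1n; apply: eq_count => z /=; rewrite eqseq_cons eqxx.
by rewrite mul0n (eq_count (a2 := pred0)) ?count_pred0 // => z /=; rewrite eqseq_cons; case: eqP.
Qed.

Lemma binomw_count v w : binomw v w = count_mem w (subwords_rep v).
Proof.
elim: v w => [|x v IH] w; first by rewrite binomw_nil /= addn0 eq_sym.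
rewrite binomw_cons /= count_cat count_map_cons addnC IH.
by case: w => // y w; rewrite IH.
Qed.

Lemma subwords_rep_size v w : w \in subwords_rep v -> (size w <= size v)%N.
Proof.
elim: v w => [|x v IH] w /=; first by rewrite inE => /eqP ->.
rewrite mem_cat => /orP[/mapP[z /IH hz ->]|/IH]; first by [].
by move/leq_trans; apply.
Qed.

Lemma subwords_rep_eq v w : w \in subwords_rep v -> size w = size v -> w = v.
Proof.
elim: v w => [|x v IH] w /=; first by rewrite inE => /eqP ->.
rewrite mem_cat => /orP[/mapP[z hz ->] [] /(IH _ hz) -> //|/subwords_rep_size].
by move=> h e; move: h; rewrite e ltnn.
Qed.

Lemma self_in v : v \in subwords_rep v.
Proof. by elim: v => [|x v IH] //=; rewrite mem_cat map_f. Qed.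

Lemma binomw_self v : binomw v v = 1%N.
Proof.
rewrite binomw_count; elim: v => [|x v IH] //=.
rewrite count_cat count_map_cons eqxx mul1n IH.
apply/eqP; rewrite -[1%N]addn0 eqn_add2l; apply/eqP/count_memPn.
by apply/negP => /subwords_rep_size; rewrite /= ltnn.
Qed.

Lemma subwP u v : reflect (u \in subwords_rep v) (subw u v).
Proof. by rewrite /subw binomw_count; apply: (iffP idP) => h; [rewrite -has_pred1 has_count | rewrite -has_count has_pred1]. Qed.

Lemma mem_subwords u v : (u \in subwords v) = subw u v.
Proof. by rewrite /subwords mem_undup; apply/idP/subwP. Qed.

Lemma binomw0 u v : ~~ subw u v -> binomw v u = 0%N.
Proof. by rewrite /subw lt0n negbK => /eqP. Qed.

Lemma subw_size u v : subw u v -> (size u <= size v)%N.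
Proof. by move/subwP/subwords_rep_size. Qed.

Lemma subw_refl v : subw v v.
Proof. by rewrite /subw binomw_self. Qed.

Lemma subw_eq u v : subw u v -> size u = size v -> u = v.
Proof. by move/subwP/subwords_rep_eq. Qed.

Lemma term_cons (a b : rat) x (v w u : seq A) :
 a^+((size w).+1 - size u) * b^+(size v - size w) * (binomw (x::w) u)%:R
 = a * (a^+(size w - size u) * b^+(size v - size w) * (binomw w u)%:R) +
   (if u is y::u' then (x==y)%:R * (a^+(size w - size u') * b^+(size v - size w) * (binomw w u')%:R) else 0).
Proof.
rewrite binomw_cons natrD mulrDr; congr (_ + _).
  case: (boolP (subw u w)) => h.
    by rewrite subSn ?subw_size // exprS; ring.
  by rewrite binomw0 // !mulr0.
by case: u => [|y u] /=; rewrite ?mulr0 // natrM subSS; ring.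
Qed.

Lemma Tsum (a b : rat) v u :
  \sum_(w <- subwords_rep v) a ^+ (size w - size u) * b ^+ (size v - size w) * (binomw w u)%:R
  = (a + b) ^+ (size v - size u) * (binomw v u)%:R.
Proof.
elim: v u => [|x v IH] u.
  by rewrite /= big_seq1 /= sub0n !expr0 !mul1r.
rewrite /= big_cat big_map /=.
under eq_bigr do rewrite term_cons.
rewrite big_split /= -mulr_sumr IH.
have -> : \sum_(i <- subwords_rep v) a ^+ (size i - size u) * b ^+ ((size v).+1 - size i) * (binomw i u)%:R = b * ((a + b) ^+ (size v - size u) * (binomw v u)%:R).
  rewrite -IH mulr_sumr big_seq [RHS]big_seq; apply: eq_bigr => w hw.
  by rewrite subSn ?subwords_rep_size // exprS; ring.
rewrite binomw_cons natrD mulrDr.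
have -> : (a + b) ^+ ((size v).+1 - size u) * (binomw v u)%:R = (a+b) * ((a + b) ^+ (size v - size u) * (binomw v u)%:R).
  case: (boolP (subw u v)) => h.
    by rewrite subSn ?subw_size // exprS; ring.
  by rewrite binomw0 // !mulr0.
case: u => [|y u] /=.
  by rewrite big1 ?addr0 ?mulr0 ?addr0; [ring|].
rewrite -mulr_sumr IH natrM subSS; ring.
Qed.

Lemma sum_undup (T : eqType) (s : seq T) (H : T -> rat) :
  \sum_(w <- undup s) (count_mem w s)%:R * H w = \sum_(w <- s) H w.
Proof.
rewrite -[X in _ = X]big_undup_iterop_count; apply: eq_bigr => w _.
rewrite Monoid.iteropE mulr_natl.
by elim: (count_mem w s) => [|n IH] //=; rewrite mulrS IH.
Qed.

Definition Q (a : rat) : incf A := fun u v => a ^+ (size v - size u)%N * Pm u v.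

Lemma convQ a b : conv (Q a) (Q b) = Q (a + b).
Proof.
apply: functional_extensionality => u; apply: functional_extensionality => v.
rewrite /conv /Q /Pm -Tsum big_mkcond /subwords.
rewrite -[X in _ = X]sum_undup; rewrite big_seq [RHS]big_seq; apply: eq_bigr => w hw.
have hwv : subw w v by rewrite -mem_subwords.
rewrite hwv andbT -binomw_count.
case: (boolP (subw u w)) => h; first by ring.
by rewrite (binomw0 h) !mulr0.
Qed.

Lemma Q0 : Q 0 = @delta A.
Proof.
apply: functional_extensionality => u; apply: functional_extensionality => v.
rewrite /Q /Pm /delta; case: eqP => [->|ne].
  by rewrite subnn expr0 binomw_self mul1r.
case: (boolP (subw u v)) => h; last by rewrite binomw0 // mulr0.
have := subw_size h; rewrite leq_eqVlt => /orP[/eqP e|lt].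
  by case: ne; apply: subw_eq.
by rewrite expr0n subn_eq0 leqNgt lt /= mul0r.
Qed.

Lemma PmQ : @Pm A = Q 1.
Proof.
apply: functional_extensionality => u; apply: functional_extensionality => v.
by rewrite /Q expr1n mul1r.
Qed.

Lemma incpowQ b n : incpow (Q b) n = Q (n%:R * b).
Proof.
elim: n => [|n IH] /=; first by rewrite mul0r Q0.
by rewrite IH convQ -addn1 natrD mulrDl mul1r.
Qed.

Lemma inv_auxP n u v : (size v <= n)%N -> subw u v -> inv_aux n (@Pm A) u v = Q (-1) u v.
Proof.
elim: n u v => [|n IH] u v hs huv /=.
  case: eqP => [->|ne]; first by rewrite /Q /Pm binomw_self subnn expr0 mul1r invr1.
  case: ne; move: hs; rewrite leqn0 => /nilP ev; subst v.
  by have := subw_size huv; rewrite leqn0 => /nilP.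
case: eqP => [->|ne]; first by rewrite /Q /Pm binomw_self subnn expr0 mul1r invr1.
have key : conv (Q (-1)) (@Pm A) u v = 0.
  by rewrite PmQ convQ addNr Q0 /delta; case: eqP.
move: key; rewrite /conv big_mkcond (bigD1_seq v) ?undup_uniq ?mem_subwords ?subw_refl //=.
rewrite ?huv ?subw_refl /=.
rewrite big_mkcondl.
set R := (X in _ + X = 0).
have -> : \sum_(i <- subwords v | i != v)
      (if subw u i && subw i v then inv_aux n (@Pm A) u i * (@Pm A) i v else 0) = R.
  apply: eq_bigr => w hw; case: ifP => // /andP[h1 h2].
  rewrite IH //.
  have := subw_size h2; rewrite leq_eqVlt => /orP[/eqP e|lt].
    by move: hw; rewrite (subw_eq h2 e) eqxx.
  by rewrite -ltnS; apply: leq_trans hs.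
have Pvv : (@Pm A) v v = 1 by rewrite /Pm binomw_self.
rewrite Pvv invr1 mulN1r mulr1 => /eqP.
by rewrite addr_eq0 => /eqP ->.
Qed.

Lemma incinvP : incinv (@Pm A) = Q (-1).
Proof.
apply: functional_extensionality => u; apply: functional_extensionality => v.
rewrite /incinv; case: (boolP (subw u v)) => h; first by rewrite inv_auxP.
by rewrite /Q /Pm binomw0 // mulr0.
Qed.

Lemma incinvD (c : rat) : c != 0 -> incinv (Dm c) = @Dm A c^-1.
Proof.
move=> c0.
apply: functional_extensionality => u; apply: functional_extensionality => v.
rewrite /incinv; case: (boolP (subw u v)) => h; last first.
  rewrite /Dm /delta; case: eqP => [e|]; last by rewrite mulr0.
  by move: h; rewrite e subw_refl.
case: (size v) => [|n] /=; case: eqP => [->|ne].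
- by rewrite /Dm /delta eqxx !mulr1 exprVn.
- by rewrite /Dm /delta; case: eqP => // _; rewrite mulr0.
- by rewrite /Dm /delta eqxx !mulr1 exprVn.
rewrite big1 ?mulr0.
  by rewrite /Dm /delta; case: eqP => // _; rewrite mulr0.
by move=> w /andP[_ hw]; rewrite /Dm /delta (negbTE hw) !mulr0.
Qed.

Lemma convDr (X : incf A) c u v :
  conv X (Dm c) u v = if subw u v then X u v * c ^+ size v else 0.
Proof.
rewrite /conv; case: (boolP (subw u v)) => h.
  rewrite big_mkcond (bigD1_seq v) ?undup_uniq ?mem_subwords ?subw_refl //=.
  rewrite ?h ?subw_refl /= big1 ?addr0.
    by rewrite /Dm /delta eqxx mulr1.
  by move=> w hw; case: ifP => // _; rewrite /Dm /delta (negbTE hw) !mulr0.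
apply: big1 => w /andP[h1 h2]; rewrite /Dm /delta; case: eqP => [e|_].
  by move: h; rewrite -e h1.
by rewrite !mulr0.
Qed.

Lemma convDl (Y : incf A) c u v :
  conv (Dm c) Y u v = if subw u v then c ^+ size u * Y u v else 0.
Proof.
rewrite /conv; case: (boolP (subw u v)) => h.
  rewrite big_mkcond (bigD1_seq u) ?undup_uniq ?mem_subwords ?subw_refl //=.
  rewrite ?h ?subw_refl /= big1 ?addr0.
    by rewrite /Dm /delta eqxx mulr1.
  by move=> w hw; case: ifP => // _; rewrite /Dm /delta eq_sym (negbTE hw) !mulr0 mul0r.
apply: big1 => w /andP[h1 h2]; rewrite /Dm /delta; case: eqP => [e|_].
  by move: h; rewrite e h2.
by rewrite !mulr0 mul0r.
Qed.

Lemma conj_gen c u v : c != 0 ->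
  conv (conv (@Dm A c^-1) (@Pm A)) (Dm c) u v = Q c u v.
Proof.
move=> c0; rewrite convDr convDl /Q.
case: (boolP (subw u v)) => h; last by rewrite /Pm binomw0 // mulr0.
rewrite exprVn -[in c ^+ size v](subnK (subw_size h)) exprD.
have cu : c ^+ size u != 0 by rewrite expf_neq0.
by field.
Qed.
End S.

Theorem mainTheorem5 (A : finType) :
  (forall (d : int) (u v : seq A),
     incpowz (@Pm A) d u v = (d%:~R : rat) ^+ (size v - size u)%N * Pm u v)
  /\
  (forall (d : int), d != 0 ->
     (forall u v : seq A,
        incpowz (@Pm A) d u v
        = conv (conv (incinv (@Dm A d%:~R)) (@Pm A)) (@Dm A d%:~R) u v) /\
     (forall u v : seq A, incinv (@Dm A d%:~R) u v = @Dm A (d%:~R)^-1 u v))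
  /\
  (forall u v : seq A,
     incinv (@Pm A) u v = conv (conv (@Dm A (-1)) (@Pm A)) (@Dm A (-1)) u v).
Proof.
have Pd : forall d : int, incpowz (@Pm A) d = Q (d%:~R).
  case=> n; rewrite /incpowz.
    by rewrite PmQ incpowQ mulr1.
  by rewrite incinvP incpowQ NegzE mulrNz mulrN1.
split; first by move=> d u v; rewrite Pd.
split.
  move=> d d0; have c0 : (d%:~R : rat) != 0 by rewrite intr_eq0.
  split; last by move=> u v; rewrite incinvD.
  by move=> u v; rewrite Pd incinvD // conj_gen.
move=> u v; rewrite incinvP.
have := @conj_gen A (-1) u v; rewrite invrN1 => ->; first by [].
by rewrite oppr_eq0 oner_eq0.
Qed.
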